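(* Let $N=1$ (a single qubit, so the qubit string is omitted and we write $\mathbf{T}^{(k)}_{\mu}(\vec n)$). Let $k\ge 3$, let $\vec n=(n_1,\dots,n_k)$ be a window string with $L\ge n_1\ge\cdots\ge n_k\ge 1$, and let $\mu=(\mu_1,\dots,\mu_{k-1})\in\{0,1\}^{k-1}$. Suppose $\vec n$ contains a ''3-streak'', i.e. there is an index $i$ with $2\le i\le k-1$ and $n_{i-1}=n_i=n_{i+1}$. Let $\vec n'$ be the length-$(k-2)$ string obtained from $\vec n$ by deleting the entries $n_{i-1}$ and $n_i$, and let $\mu'\in\{0,1\}^{k-3}$ be obtained from $\mu$ by deleting its $(i-1)$-th and $i$-th entries. Then there is a scalar $c$, depending only on $k$, $i$ and $\mu$ (and not on the unitaries $U_1,\dots,U_L$ nor on $\tilde O$), such that $$\mathbf{T}^{(k)}_{\mu}(\vec n)=c\,\mathbf{T}^{(k-2)}_{\mu'}(\vec n').$$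
   Context: Fix integers $L\ge 1$ and $N\ge 1$, and a set $Q$ of $N$ qubit labels. For $q\in Q$ let $\sigma_z^{[q]}$ denote the Pauli-$Z$ operator acting on qubit $q$ tensored with the identity on all other qubits of $(\mathbb{C}^2)^{\otimes N}$. (Digital control) Let $U_1,\dots,U_L$ be arbitrary unitaries on $(\mathbb{C}^2)^{\otimes N}$ ($U_n$ is the control propagator, constant on the $n$-th time window), and let $\tilde O$ be an arbitrary Hermitian unitary operator on $(\mathbb{C}^2)^{\otimes N}$ (the toggling-frame observable). For $q\in Q$ and $n\in\{1,\dots,L\}$ define $\tilde h_q(n)=U_n^\dagger\sigma_z^{[q]}U_n$ and $\bar h_q(n)=-\tilde O^{-1}\tilde h_q(n)\tilde O$. For $k\ge1$, a window string $\vec n=(n_1,\dots,n_k)$ with $L\ge n_1\ge\cdots\ge n_k\ge1$, a qubit string $\vec q=(q_1,\dots,q_k)\in Q^k$ and a sign string $\mu\in\{0,1\}^{k-1}$, the (window-framed) control tensor is $$\mathbf{T}^{(k)}_{\vec q;\mu}(\vec n)=\sum_{b\in\{0,1\}^k}(-1)^{\sum_{j=1}^{k-1}\mu_j b_{j+1}}\Big(\prod^{\downarrow}_{i:\,b_i=1}\bar h_{q_i}(n_i)\Big)\Big(\prod^{\uparrow}_{i:\,b_i=0}\tilde h_{q_i}(n_i)\Big),$$ where $\prod^{\downarrow}$ is the ordered product with the index $i$ decreasing from left to right, $\prod^{\uparrow}$ is the ordered product with $i$ increasing from left to right, and an empty product is the identity. When $N=1$ the qubit string is omitted and we write $\mathbf{T}^{(k)}_{\mu}(\vec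 n)$. *)

(* Defs.v *)
From HB Require Import structures.
From mathcomp Require Import all_boot all_order all_algebra.
Set Implicit Arguments. Unset Strict Implicit. Unset Printing Implicit Defensive.
Import Order.TTheory GRing.Theory Num.Theory.
Local Open Scope ring_scope.

(* Single qubit (N = 1): operators are 2x2 matrices over a numeric closed
   field C (e.g. the complex numbers). *)

Definition adjmx {C : numClosedFieldType} (A : 'M[C]_2) : 'M[C]_2 :=
  (map_mx Num.conj A)^T.

Definition unitary_mx {C : numClosedFieldType} (A : 'M[C]_2) : Prop :=
  adjmx A *m A = 1%:M /\ A *m adjmx A = 1%:M.

Definition hermitian_mx {C : numClosedFieldType} (A : 'M[C]_2) : Prop :=
  adjmx A = A.

Definition sigmaz {C : numClosedFieldType} : 'M[C]_2 :=
  \matrix_(i < 2, j < 2) (if i == j then (if i == 0 :> nat then 1 else -1) else 0).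

(* \tilde h(n) = U_n^dagger sigma_z U_n  (windows indexed by nat, 1..L) *)
Definition htilde {C : numClosedFieldType} (U : nat -> 'M[C]_2) (m : nat) : 'M[C]_2 :=
  adjmx (U m) *m sigmaz *m U m.

Definition hbar {C : numClosedFieldType} (U : nat -> 'M[C]_2) (O : 'M[C]_2) (m : nat)
  : 'M[C]_2 :=
  - (invmx O *m htilde U m *m O).

(* Control tensor T^{(k)}_mu(n) with k = size n, entries 0-indexed:
   n = [n_1; ...; n_k], mu = [mu_1; ...; mu_{k-1}], b : 'I_k -> bool with
   b i standing for b_{i+1}.  The sign is (-1)^{sum_{j=1}^{k-1} mu_j b_{j+1}},
   written with the 0-based index j (= paper's j+1) ranging over 1..k-1. *)
Definition ctensor {C : numClosedFieldType} (U : nat -> 'M[C]_2) (O : 'M[C]_2)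
  (n : seq nat) (mu : seq bool) : 'M[C]_2 :=
  \sum_(b : {ffun 'I_(size n) -> bool})
     ((-1) ^+ (\sum_(j < size n | (0 < j)%N)
                  (nth false mu j.-1 && b j : nat)))%N
     *: ((\prod_(i <- rev (enum 'I_(size n)) | b i) hbar U O (nth 0%N n i))
         *m (\prod_(i < size n | ~~ b i) htilde U (nth 0%N n i))).

(* delete the entries with 1-based positions i-1 and i *)
Definition delete2 {T : Type} (i : nat) (s : seq T) : seq T :=
  take (i - 2) s ++ drop i s.

(* Main.v *)
Require Import Defs.
From HB Require Import structures.
From mathcomp Require Import all_boot all_order all_algebra ring zify.
Import Order.TTheory GRing.Theory Num.Theory.
Local Open Scope ring_scope.

Section G.
Variable C : numClosedFieldType.
Implicit Types (A B : nat -> 'M[C]_2) (s : nat -> C).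

Definition psi A B s (X : 'M[C]_2) (j : nat) : 'M[C]_2 :=
  X *m B j + s j *: (A j *m X).

Lemma psi_sum A B s (I : finType) (F : I -> 'M[C]_2) j :
  psi A B s (\sum_i F i) j = \sum_i psi A B s (F i) j.
Proof.
by rewrite /psi mulmx_suml mulmx_sumr scaler_sumr -big_split.
Qed.

Definition ext {k} (f : {ffun 'I_k -> bool}) (x : bool) : {ffun 'I_k.+1 -> bool} :=
  [ffun i => if unlift ord_max i is Some j then f j else x].

Lemma ext_widen k (f : {ffun 'I_k -> bool}) x (j : 'I_k) : ext f x (widen_ord (leqnSn k) j) = f j.
Proof.
rewrite ffunE.
have -> : widen_ord (leqnSn k) j = lift ord_max j by apply: val_inj; rewrite /= /bump leqNgt ltn_ord.
by rewrite liftK.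
Qed.

Lemma ext_max k (f : {ffun 'I_k -> bool}) x : ext (k:=k) f x ord_max = x.
Proof. by rewrite ffunE unlift_none. Qed.

Definition restr {k} (b : {ffun 'I_k.+1 -> bool}) : {ffun 'I_k -> bool} * bool :=
  ([ffun j => b (widen_ord (leqnSn k) j)], b ord_max).

Lemma sum_ext k (F : {ffun 'I_k.+1 -> bool} -> 'M[C]_2) :
  \sum_b F b = \sum_(f : {ffun 'I_k -> bool}) \sum_(x : bool) F (ext f x).
Proof.
rewrite pair_big /=.
rewrite (reindex (fun p : {ffun 'I_k -> bool} * bool => ext p.1 p.2)) //.
exists (@restr k).
  move=> [f x] _; rewrite /restr ext_max; congr (_, _).
  by apply/ffunP => j; rewrite ffunE ext_widen.
move=> b _; apply/ffunP => i; rewrite ffunE /=.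
case: (unliftP ord_max i) => [j ->|->]; last by [].
rewrite ffunE; congr (b _); apply: val_inj; by rewrite /= /bump leqNgt ltn_ord.
Qed.

Lemma wL1 k (f : {ffun 'I_k -> bool}) (g : {ffun 'I_k.+1 -> bool}) s :
  (forall j, g (widen_ord (leqnSn k) j) = f j) ->
  \prod_(i < k) (if g (widen_ord (leqnSn k) i) then s i else 1) =
  \prod_(i < k) (if f i then s (i : nat) else 1 : C).
Proof. by move=> H; apply: eq_bigr => i _; rewrite H. Qed.

Lemma wL2 k (f : {ffun 'I_k -> bool}) (g : {ffun 'I_k.+1 -> bool}) (A : nat -> 'M[C]_2) :
  (forall j, g (widen_ord (leqnSn k) j) = f j) ->
  \prod_(j <- rev (enum 'I_k) | g (widen_ord (leqnSn k) j)) A j =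
  \prod_(j <- rev (enum 'I_k) | f j) A j.
Proof. by move=> H; apply: eq_bigl => i; rewrite H. Qed.

Lemma wL3 k (f : {ffun 'I_k -> bool}) (g : {ffun 'I_k.+1 -> bool}) (B : nat -> 'M[C]_2) :
  (forall j, g (widen_ord (leqnSn k) j) = f j) ->
  \prod_(i < k) (if ~~ g (widen_ord (leqnSn k) i) then B i else 1) =
  \prod_(i < k | ~~ f i) B i.
Proof. by move=> H; rewrite [RHS]big_mkcond; apply: eq_bigr => i _; rewrite H. Qed.

Definition Pk A B s k := foldl (psi A B s) 1%:M (iota 0 k).

Lemma G k A B s :
  \sum_(b : {ffun 'I_k -> bool})
     (\prod_(j < k) (if b j then s j else 1)) *:
     ((\prod_(i <- rev (enum 'I_k) | b i) A i) *m (\prod_(i < k | ~~ b i) B i))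
  = Pk A B s k.
Proof.
elim: k => [|k IH].
  rewrite (big_pred1 [ffun => false]); last first.
    move=> f /=; apply/esym/eqP/ffunP => -[m Hm]; by [].
  have -> : enum 'I_0 = [::] by apply/size0nil; rewrite size_enum_ord.
  by rewrite big_ord0 scale1r big_nil big_ord0 mul1mx.
rewrite /Pk; have -> : iota 0 k.+1 = iota 0 k ++ [:: k] by rewrite -addn1 iotaD.
rewrite foldl_cat -/(Pk A B s k) -IH /= psi_sum.
rewrite sum_ext; apply: eq_bigr => f _.
rewrite big_bool /= !big_ord_recr /= !ext_max.
rewrite enum_ordSr rev_rcons !big_cons ext_max /= -map_rev !big_map.
rewrite (big_mkcond (fun i : 'I_k.+1 => ~~ ext f true i)).
rewrite (big_mkcond (fun i : 'I_k.+1 => ~~ ext f false i)).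
rewrite !big_ord_recr /= !ext_max /=.
rewrite (wL1 _ _ _ _ (ext_widen k f true)) (wL1 _ _ _ _ (ext_widen k f false)) (wL2 _ _ _ _ (ext_widen k f true)) (wL2 _ _ _ _ (ext_widen k f false)) (wL3 _ _ _ _ (ext_widen k f true)) (wL3 _ _ _ _ (ext_widen k f false)).
set w := \prod_(i < k) _; set L := \prod_(j <- _ | _) _; set R := \prod_(i < k | _) _.
rewrite /psi !mulr1 -!mulmxE addrC; congr (_ + _).
  by rewrite -scalemxAl mulmxA.
by rewrite -scalemxAr scalerA mulrC !mulmxA.
Qed.

Definition sv (mu : seq bool) (j : nat) : C :=
  if j == 0%N then 1 else (-1) ^+ (nth false mu j.-1 : nat).

Lemma sv_pm mu j : sv mu j = 1 \/ sv mu j = -1.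
Proof. rewrite /sv; case: (j == 0%N); first by left. case: (nth false mu j.-1); [right|left]; by rewrite ?expr1 ?expr0. Qed.

Lemma ct_Pk U O n mu : ctensor U O n mu =
  Pk (fun j => hbar U O (nth 0%N n j)) (fun j => htilde U (nth 0%N n j)) (sv mu) (size n).
Proof.
rewrite /ctensor -G; apply: eq_bigr => b _; congr (_ *: _).
rewrite (big_morph (fun m : nat => (-1 : C) ^+ m) (fun x y => exprD (-1) x y) (expr0 (-1))).
rewrite big_mkcond; apply: eq_bigr => j _ /=.
rewrite /sv; case: (nat_of_ord j) => [|j'] /=; case: (b j) => //=.
  by rewrite andbT. by rewrite andbF expr0.
Qed.

Lemma triple (A0 B0 X : 'M[C]_2) (a b c : C) :
  A0 *m A0 = 1%:M -> B0 *m B0 = 1%:M -> (a = 1 \/ a = -1) ->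
  let P t Y := Y *m B0 + t *: (A0 *m Y) in
  P c (P b (P a X)) = (1 + a * b + a * c + b * c) *: P a X.
Proof.
move=> HA HB Ha P; rewrite /P.
have HB' : forall Y : 'M[C]_2, Y *m B0 *m B0 = Y by move=> Y; rewrite -mulmxA HB mulmx1.
do 4 rewrite ?mulmxDl ?mulmxDr -?scalemxAl -?scalemxAr ?mulmxA ?HA ?mul1mx ?HB'.
move: (A0 *m X *m B0) => u2; move: (X *m B0) => u3; move: (A0 *m X) => u4.
apply/matrixP => i j; rewrite !mxE.
by case: Ha => ->; ring.
Qed.

Lemma psi3 A B s X p :
  A p.+1 = A p -> A p.+2 = A p -> B p.+1 = B p -> B p.+2 = B p ->
  A p *m A p = 1%:M -> B p *m B p = 1%:M -> (s p = 1 \/ s p = -1) ->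
  psi A B s (psi A B s (psi A B s X p) p.+1) p.+2 =
  (1 + s p * s p.+1 + s p * s p.+2 + s p.+1 * s p.+2) *: psi A B s X p.
Proof.
move=> e1 e2 e3 e4 HA HB Hs; rewrite /psi e1 e2 e3 e4.
exact: (triple (A p) (B p) X (s p) (s p.+1) (s p.+2) HA HB Hs).
Qed.

Lemma foldl_scale A B s (c : C) X r :
  foldl (psi A B s) (c *: X) r = c *: foldl (psi A B s) X r.
Proof.
elim: r X => [|j r IH] X //=; rewrite -IH; congr foldl.
by rewrite /psi scalerDr -scalemxAl -scalemxAr !scalerA mulrC.
Qed.

Lemma foldl_shift A B s A' B' s' l : forall m m' X,
  (forall t, (t < l)%N -> [/\ A (m + t)%N = A' (m' + t)%N,
       B (m + t)%N = B' (m' + t)%N & s (m + t)%N = s' (m' + t)%N]) ->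
  foldl (psi A B s) X (iota m l) = foldl (psi A' B' s') X (iota m' l).
Proof.
elim: l => [|l IH] m m' X H //=.
have [e1 e2 e3] := H 0%N isT; rewrite !addn0 in e1 e2 e3.
have -> : psi A B s X m = psi A' B' s' X m' by rewrite /psi e1 e2 e3.
apply: IH => t Ht.
by have := H t.+1 Ht; rewrite !addnS !addSn.
Qed.

Lemma sigmaz2 : (sigmaz : 'M[C]_2) *m sigmaz = 1%:M.
Proof.
apply/matrixP => i j; rewrite !mxE !big_ord_recl big_ord0 !mxE.
case: i => [[|[|i]] Hi] //; case: j => [[|[|j]] Hj] //=; rewrite ?mxE /=; ring.
Qed.

Lemma htilde2 (U : nat -> 'M[C]_2) m : unitary_mx (U m) -> htilde U m *m htilde U m = 1%:M.
Proof.
move=> [H1 H2]; rewrite /htilde -!mulmxA (mulmxA (U m) (adjmx (U m))) H2 mul1mx.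
by rewrite (mulmxA sigmaz sigmaz) sigmaz2 mul1mx.
Qed.

Lemma hbar2 (U : nat -> 'M[C]_2) (O : 'M[C]_2) m : unitary_mx (U m) -> unitary_mx O -> hbar U O m *m hbar U O m = 1%:M.
Proof.
move=> HU [HO1 HO2]; have HOu := (mulmx1_unit HO1).2.
rewrite /hbar mulNmx mulmxN opprK -!mulmxA (mulmxA O (invmx O)) mulmxV // mul1mx.
case: HU => HU1 HU2.
rewrite (mulmxA (U m) (adjmx (U m))) HU2 mul1mx (mulmxA sigmaz sigmaz) sigmaz2 mul1mx.
by rewrite (mulmxA (adjmx (U m))) HU1 mul1mx mulVmx.
Qed.

Lemma del2_nth (T : Type) (x0 : T) (s : seq T) p j : (p.+2 <= size s)%N ->
  nth x0 (take p s ++ drop p.+2 s) j = nth x0 s (if (j < p)%N then j else j.+2).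
Proof.
move=> H; rewrite nth_cat size_take.
have -> : (p < size s)%N by lia.
case: ltnP => Hj; first by rewrite nth_take.
rewrite nth_drop; congr nth; lia.
Qed.

Lemma del2_size (T : Type) (s : seq T) p : (p.+2 <= size s)%N ->
  size (take p s ++ drop p.+2 s) = (size s - 2)%N.
Proof. move=> H; rewrite size_cat size_take size_drop; case: ifP; lia. Qed.
End G.
Arguments del2_size {T s p}.

Theorem proposition1 (C : numClosedFieldType) (k i : nat) (mu : seq bool) :
  (3 <= k)%N -> size mu = k.-1 -> (2 <= i <= k - 1)%N ->
  exists c : C,
    forall (L : nat) (U : nat -> 'M[C]_2) (O : 'M[C]_2) (n : seq nat),
      (forall m, (1 <= m <= L)%N -> unitary_mx (U m)) ->
      hermitian_mx O -> unitary_mx O ->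
      size n = k ->
      sorted (fun a b => (b <= a)%N) n ->
      all (fun m => (1 <= m <= L)%N) n ->
      nth 0%N n (i - 2) = nth 0%N n (i - 1) ->
      nth 0%N n (i - 1) = nth 0%N n i ->
      ctensor U O n mu = c *: ctensor U O (delete2 i n) (delete2 i mu).
Proof.
move=> Hk Hmu /andP[Hi1 Hi2].
have [p ip] : exists p, i = p.+2 by exists (i - 2)%N; lia.
subst i.
exists (1 + sv C mu p * sv C mu p.+1 + sv C mu p * sv C mu p.+2 + sv C mu p.+1 * sv C mu p.+2).
move=> L U O n HU Hh HO Hn Hsort Hall e1 e2.
have E2 : (p.+2 - 2 = p)%N by lia.
have E1 : (p.+2 - 1 = p.+1)%N by lia.
rewrite E2 in e1; rewrite E1 in e1 e2.
rewrite /delete2 E2.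
have Hsn : (p.+2 <= size n)%N by lia.
have Hsm : (p.+2 <= size mu)%N by lia.
rewrite !ct_Pk /Pk (del2_size Hsn) Hn.
set r := (k - p - 3)%N.
have -> : (k - 2 = p + (1 + r))%N by rewrite /r; lia.
have -> : k = (p + (3 + r))%N by rewrite /r; lia.
rewrite !iotaD !foldl_cat add0n /=.
set A := fun j => hbar U O (nth 0%N n j).
set B := fun j => htilde U (nth 0%N n j).
set A' := fun j => hbar U O (nth 0%N (take p n ++ drop p.+2 n) j).
set B' := fun j => htilde U (nth 0%N (take p n ++ drop p.+2 n) j).
set s' := sv C (take p mu ++ drop p.+2 mu).
have Hun : unitary_mx (U (nth 0%N n p)).
  by apply: HU; apply: (all_nthP 0%N Hall); lia.
rewrite psi3; first last.
- exact: sv_pm.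
- exact: htilde2.
- exact: hbar2.
- by rewrite /B -e2 -e1.
- by rewrite /B -e1.
- by rewrite /A -e2 -e1.
- by rewrite /A -e1.
rewrite foldl_scale; congr (_ *: _).
have hA : forall j, A' j = A (if (j < p)%N then j else j.+2).
  by move=> j; rewrite /A' /A del2_nth.
have hB : forall j, B' j = B (if (j < p)%N then j else j.+2).
  by move=> j; rewrite /B' /B del2_nth.
have hs : forall j, s' j = if j == 0%N then 1 else
    (-1) ^+ (nth false mu (if (j.-1 < p)%N then j.-1 else j.-1.+2) : nat).
  by move=> j; rewrite /s' /sv del2_nth.
rewrite [RHS](foldl_shift C A' B' s' A B (sv C mu) r (p + 1) (p + 3)); last first.
  move=> t Ht; rewrite hA hB hs.
  have -> : ((p + 1 + t) < p)%N = false by lia.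
  have -> : ((p + 1 + t).-1 < p)%N = false by lia.
  have -> : (p + 1 + t == 0)%N = false by lia.
  have -> : ((p + 1 + t).+2 = p + 3 + t)%N by lia.
  have -> : ((p + 1 + t).-1.+2 = (p + 3 + t).-1)%N by lia.
  split => //; rewrite /sv; have -> : (p + 3 + t == 0)%N = false by lia. by [].
have -> : psi C A' B' s' (foldl (psi C A' B' s') 1%:M (iota 0 p)) p =
          psi C A B (sv C mu) (foldl (psi C A B (sv C mu)) 1%:M (iota 0 p)) p.
  rewrite (foldl_shift C A' B' s' A B (sv C mu) p 0 0); last first.
    move=> t Ht; rewrite hA hB hs !add0n Ht /sv.
    case: (t == 0%N) => //; have -> : (t.-1 < p)%N by lia. by [].
  have eA : A' p = A p by rewrite hA ltnn /A -e2 -e1.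
  have eB : B' p = B p by rewrite hB ltnn /B -e2 -e1.
  have eS : s' p = sv C mu p.
    rewrite hs /sv; case: eqP => [//|Hp0]; have -> : (p.-1 < p)%N by lia. by [].
  by rewrite /psi eA eB eS.
by [].
Qed.
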